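(* For $\theta,\rho\in\mathbb{R}$ let $a_0=\tfrac14(1-\cos2\theta-\sin2\theta-\cos2\rho-\sin2\rho+\cos(2\theta-2\rho)+\sin(2\theta-2\rho))$, $a_1=\tfrac14(1+\cos2\theta-\sin2\theta+\cos2\rho-\sin2\rho+\cos(2\theta-2\rho)-\sin(2\theta-2\rho))$, $a_2=\tfrac12(1-\cos(2\theta-2\rho)-\sin(2\theta-2\rho))$, $a_3=\tfrac12(1-\cos(2\theta-2\rho)+\sin(2\theta-2\rho))$, $a_4=\tfrac14(1+\cos2\theta+\sin2\theta+\cos2\rho+\sin2\rho+\cos(2\theta-2\rho)+\sin(2\theta-2\rho))$, $a_5=\tfrac14(1-\cos2\theta+\sin2\theta-\cos2\rho+\sin2\rho+\cos(2\theta-2\rho)-\sin(2\theta-2\rho))$, and $m_0^{(\theta,\rho)}(z)=\frac{1}{\sqrt2}\sum_{k=0}^5a_kz^k$. Then: (a) $m_0^{(\theta,\rho)}(z)$ is divisible by $(1+z)^2$ if and only if $\cos2\theta+\cos2\rho=\tfrac12$. (b) $m_0^{(\theta,\rho)}(z)$ is divisible by $(1+z)^3$ if and only if $\cos2\theta+\cos2\rho=\tfrac12$ and $\sin2\theta+\sin2\rho=2\sin(2\theta-2\rho)$; equivalently, if and only if $(\theta,\rho)$ equals $(\theta_0,\rho_0)$ with $\theta_0=\cos^{-1}\sqrt[4]{5/32}$ and $\rho_0=\cos^{-1}\sqrt{5/4-\sqrt{5/32}}$, or is obtained from this pair by $(\theta,\rho)\mapsto(\theta+m\pi,\rho+n\pi)$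 with $m,n\in\mathbb{Z}$, or by $(\theta,\rho)\mapsto(-\theta,-\rho)$, or by both.
   Context: These $a_k$ are the filter coefficients of the genus-3, scale-2 loop $A(z)=V(Q_\theta^\perp+zQ_\theta)(Q_\rho^\perp+zQ_\rho)$, where $Q_\theta$ is the projection onto $(\cos\theta,\sin\theta)^{T}$ and $V$ is proportional to $\begin{pmatrix}1&1\\1&-1\end{pmatrix}$; divisibility is in the polynomial ring $\mathbb{C}[z]$. *)

(* Defs.v *)
From HB Require Import structures.
From mathcomp Require Import all_boot all_order all_algebra.
From mathcomp Require Import reals trigo.
From mathcomp Require Import complex.
Set Implicit Arguments. Unset Strict Implicit. Unset Printing Implicit Defensive.
Import Order.TTheory GRing.Theory Num.Theory.
Local Open Scope ring_scope.

Section Filter.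
Variable R : realType.

Definition acoef (theta rho : R) (k : nat) : R :=
  let c2t := cos (2 * theta) in let s2t := sin (2 * theta) in
  let c2r := cos (2 * rho) in let s2r := sin (2 * rho) in
  let cd := cos (2 * theta - 2 * rho) in let sd := sin (2 * theta - 2 * rho) in
  match k with
  | 0%N => 4^-1 * (1 - c2t - s2t - c2r - s2r + cd + sd)
  | 1%N => 4^-1 * (1 + c2t - s2t + c2r - s2r + cd - sd)
  | 2%N => 2^-1 * (1 - cd - sd)
  | 3%N => 2^-1 * (1 - cd + sd)
  | 4%N => 4^-1 * (1 + c2t + s2t + c2r + s2r + cd + sd)
  | 5%N => 4^-1 * (1 - c2t + s2t - c2r + s2r + cd - sd)
  | _ => 0
  end.

Definition m0 (theta rho : R) : {poly R[i]} :=
  \sum_(k < 6) ((((Num.sqrt (2 : R))^-1 * acoef theta rho k)%:C)%C *: 'X^k).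

Definition theta0 : R := acos (Num.sqrt (Num.sqrt (5 / 32))).
Definition rho0 : R := acos (Num.sqrt (5 / 4 - Num.sqrt (5 / 32))).

End Filter.

(* Main.v *)
Require Import Defs.
From HB Require Import structures.
From mathcomp Require Import all_boot all_order all_algebra.
From mathcomp Require Import reals trigo.
From mathcomp Require Import complex.
From mathcomp Require Import ring lra.
Import Order.TTheory GRing.Theory Num.Theory.
Local Open Scope ring_scope.
Section Ang.
Variable R : realType.

Lemma cos_int (x : R) (k : int) : cos (x + k%:~R * (pi *+ 2)) = cos x.
Proof.
case: k => n.
  by rewrite -[Posz n]/(n%:Z) pmulrn mulr_natl (periodicn (@cosD2pi R)).
rewrite NegzE mulrNz mulNr.
rewrite -[in RHS](subrK ((n.+1)%:~R * (pi *+ 2)) x).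
by rewrite -[(n.+1)%:~R]/((n.+1)%:R) mulr_natl (periodicn (@cosD2pi R)).
Qed.

Lemma sin_int (x : R) (k : int) : sin (x + k%:~R * (pi *+ 2)) = sin x.
Proof.
case: k => n.
  by rewrite -[Posz n]/(n%:Z) pmulrn mulr_natl (periodicn (@sinD2pi R)).
rewrite NegzE mulrNz mulNr.
rewrite -[in RHS](subrK ((n.+1)%:~R * (pi *+ 2)) x).
by rewrite -[(n.+1)%:~R]/((n.+1)%:R) mulr_natl (periodicn (@sinD2pi R)).
Qed.

Lemma cos_eq1 (z : R) : cos z = 1 -> exists k : int, z = k%:~R * (pi *+ 2).
Proof.
move=> hz.
have p2 : 0 < pi *+ 2 :> R by rewrite pmulrn_lgt0 // pi_gt0.
set k := Num.floor (z / (pi *+ 2)).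
exists k.
have /andP [h1 h2] := floor_itv (z / (pi *+ 2)).
rewrite -/k in h1 h2.
set w := z - k%:~R * (pi *+ 2).
have hw0 : 0 <= w.
  by rewrite /w subr_ge0 -ler_pdivlMr.
have hw1 : w < pi *+ 2.
  rewrite /w ltrBlDl -[X in _ < _ + X]mul1r -mulrDl -ltr_pdivrMr //.
  by move: h2; rewrite intrD.
have cw : cos w = 1 by rewrite /w -mulNr -rmorphN /= cos_int.
suff : w = 0 by move/eqP; rewrite subr_eq0 => /eqP.
have pi0 := @pi_gt0 R.
have [hle|hlt] := lerP w pi.
  apply: (@cos_inj R); rewrite ?in_itv /= ?hw0 ?hle ?lexx ?ltW //.
  by rewrite cw cos0.
exfalso.
set w' := pi *+ 2 - w.
have cw' : cos w' = 1 by rewrite /w' addrC -[X in cos (_ + X)]mul1r -[1]/(1%:~R) cos_int cosN.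
have hw'0 : 0 <= w' by rewrite /w' subr_ge0 ltW.
have hw'1 : w' <= pi by rewrite /w' lerBlDr mulr2n lerD2l ltW.
have : w' = 0.
  apply: (@cos_inj R).
  - by rewrite in_itv /= hw'0 hw'1.
  - by rewrite in_itv /= lexx ltW.
  - by rewrite cw' cos0.
move=> /eqP; rewrite /w' subr_eq0 => /eqP h.
by move: hw1; rewrite -h ltxx.
Qed.

Lemma cs_eq (x y : R) : cos x = cos y -> sin x = sin y ->
  exists k : int, x = y + k%:~R * (pi *+ 2).
Proof.
move=> hc hs.
have : cos (x - y) = 1 by rewrite cosB hc hs -!expr2 cos2Dsin2.
case/cos_eq1 => k hk; exists k.
by rewrite -hk addrC subrK.
Qed.
End Ang.
Section G.
Variable R : realType.
Let q : R := Num.sqrt (5 / 32).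
Let t0 : R := acos (Num.sqrt q).
Let r0 : R := acos (Num.sqrt (5 / 4 - q)).

Lemma q_facts : [/\ 0 <= q, q ^+ 2 = 5 / 32, 1/4 < q & q < 1/2].
Proof.
have h0 : 0 <= q by rewrite sqrtr_ge0.
have h2 : q ^+ 2 = 5 / 32 by rewrite sqr_sqrtr //; lra.
split => //; nra.
Qed.

Lemma t0_facts : [/\ cos t0 ^+ 2 = q, 0 <= cos t0, 0 <= sin t0 & sin t0 ^+ 2 = 1 - q].
Proof.
have [q0 q2 q1 q3] := q_facts.
set A := Num.sqrt q.
have A0 : 0 <= A by rewrite sqrtr_ge0.
have A2 : A ^+ 2 = q by rewrite sqr_sqrtr.
have Ai : -1 <= A <= 1 by apply/andP; split; nra.
have cA : cos t0 = A by rewrite /t0 acosK // in_itv /=.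
have s0 : 0 <= sin t0.
  by apply: sin_ge0_pi; rewrite /t0 acos_ge0 // acos_lepi.
by rewrite sin2cos2 cA A2; split.
Qed.

Lemma r0_facts : [/\ cos r0 ^+ 2 = 5/4 - q, 0 <= cos r0, 0 <= sin r0 & sin r0 ^+ 2 = q - 1/4].
Proof.
have [q0 q2 q1 q3] := q_facts.
set A := Num.sqrt (5/4 - q).
have A0 : 0 <= A by rewrite sqrtr_ge0.
have A2 : A ^+ 2 = 5/4 - q by rewrite sqr_sqrtr //; lra.
have Ai : -1 <= A <= 1 by apply/andP; split; nra.
have cA : cos r0 = A by rewrite /r0 acosK // in_itv /=.
have s0 : 0 <= sin r0.
  by apply: sin_ge0_pi; rewrite /r0 acos_ge0 // acos_lepi.
by rewrite sin2cos2 cA A2; split => //; lra.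
Qed.

Lemma key : sin r0 * cos r0 * (4 * q - 1) = (2 - 4 * q) * cos t0 * sin t0.
Proof.
have [q0 q2 q1 q3] := q_facts.
have [a2 a0 b0 b2] := t0_facts.
have [c2 c0 d0 d2] := r0_facts.
set X := sin r0 * cos r0 * (4 * q - 1).
set Y := (2 - 4 * q) * cos t0 * sin t0.
have X0 : 0 <= X by rewrite /X; apply: mulr_ge0; [apply: mulr_ge0|]; lra.
have Y0 : 0 <= Y by rewrite /Y; apply: mulr_ge0; [apply: mulr_ge0|]; lra.
have XY : X ^+ 2 = Y ^+ 2.
  rewrite /X /Y !exprMn d2 c2 a2 b2.
  apply/eqP; rewrite -subr_eq0; apply/eqP.
  transitivity (2 * (q ^+ 2 - 5 / 32)); first by field.
  by rewrite q2; field.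
nra.
Qed.

Definition c0 := cos (2 * t0).

Lemma half_angle (x y : R) : cos (2 * x) = cos (2 * y) -> sin (2 * x) = sin (2 * y) ->
  exists k : int, x = y + k%:~R * pi.
Proof.
move=> hc hs; have [k hk] := @cs_eq R _ _ hc hs; exists k.
have e : k%:~R * (pi *+ 2) = 2 * (k%:~R * pi) :> R by ring.
rewrite e in hk.
lra.
Qed.

Lemma cos2 (x : R) : cos (2 * x) = 2 * cos x ^+ 2 - 1.
Proof. by rewrite mulr_natl cos_mulr2n mulr_natl. Qed.
Lemma sin2 (x : R) : sin (2 * x) = 2 * (cos x * sin x).
Proof. by rewrite mulr_natl sin_mulr2n mulr_natl. Qed.

Lemma base_eq : cos (2 * t0) = 2 * q - 1 /\ cos (2 * r0) = 3/2 - 2 * q /\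
  sin (2 * t0) + sin (2 * r0) = 2 * (sin (2 * t0) * cos (2 * r0) - cos (2 * t0) * sin (2 * r0)).
Proof.
have [q0 q2 q1 q3] := q_facts.
have [a2 a0 b0 b2] := t0_facts.
have [c2 c0 d0 d2] := r0_facts.
have k := key.
rewrite !cos2 !sin2 a2 c2; split; first by ring.
split; first by field.
nra.
Qed.

Lemma orbit (th rh : R) :
  (cos (2 * th) + cos (2 * rh) = 2^-1 /\
   sin (2 * th) + sin (2 * rh) = 2 * sin (2 * th - 2 * rh))
  <-> exists (m n : int) (s : bool),
          let sg : R := if s then -1 else 1 in
          th = sg * t0 + m%:~R * pi /\ rh = sg * r0 + n%:~R * pi.
Proof.
have [q0 q2 q1 q3] := q_facts.
have [hc0 [hC0 hb]] := base_eq.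
set c0 := cos (2 * t0) in hc0 hb *.
set C0 := cos (2 * r0) in hC0 hb *.
set s0 := sin (2 * t0) in hb *.
set S0 := sin (2 * r0) in hb *.
rewrite sinB.
split.
- move=> [h1 h2].
  set c := cos (2 * th) in h1 h2 *.
  set C := cos (2 * rh) in h1 h2 *.
  set s := sin (2 * th) in h2 *.
  set S := sin (2 * rh) in h2 *.
  have p1 : c ^+ 2 + s ^+ 2 = 1 by rewrite cos2Dsin2.
  have p2 : C ^+ 2 + S ^+ 2 = 1 by rewrite cos2Dsin2.
  have p3 : c0 ^+ 2 + s0 ^+ 2 = 1 by rewrite cos2Dsin2.
  have hC : C = 2^-1 - c by lra.
  rewrite hC in h2 p2.
  have hE : S * (1 + 2 * c) = - 2 * c * s by lra.
  have hsq : (S * (1 + 2 * c)) ^+ 2 = (- 2 * c * s) ^+ 2 by rewrite hE.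
  have hS2 : S ^+ 2 = 1 - (2^-1 - c) ^+ 2 by lra.
  have hs2 : s ^+ 2 = 1 - c ^+ 2 by lra.
  rewrite !exprMn hS2 hs2 in hsq.
  have hpol : c ^+ 2 + 2 * c + 3 / 8 = 0 by nra.
  have cge := cos_geN1 (2 * th).
  have hc : c = c0 by rewrite hc0; nra.
  have hCC : C = C0 by rewrite hC hc hc0 hC0; field.
  have hss : (s - s0) * (s + s0) = 0 by rewrite -hc in p3; nra.
  have pos : 0 < 1 + 2 * c by rewrite hc hc0; lra.
  have hE0 : S0 * (1 + 2 * c) = - 2 * c * s0 by rewrite hc; rewrite hc0 hC0 in hb *; nra.
  have nz : 1 + 2 * c != 0 by rewrite gt_eqF.
  move: hss => /eqP; rewrite mulf_eq0 subr_eq0 addr_eq0 => /orP [] /eqP es.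
    have eS : S = S0.
      by apply: (mulIf nz); rewrite hE hE0 es.
    have [m em] := @half_angle th t0 hc es.
    have [n en] := @half_angle rh r0 hCC eS.
    by exists m, n, false; rewrite /= !mul1r.
  have eS : S = - S0.
    by apply: (mulIf nz); rewrite mulNr hE hE0 es; ring.
  have [m em] : exists m : int, th = - t0 + m%:~R * pi.
    by apply: half_angle; rewrite mulrN ?cosN ?sinN.
  have [n en] : exists n : int, rh = - r0 + n%:~R * pi.
    by apply: half_angle; rewrite mulrN ?cosN ?sinN.
  by exists m, n, true; rewrite /= !mulN1r.
- move=> [m [n [b /= [ht hr]]]].
  have e1 : 2 * th = 2 * ((if b then -1 else 1) * t0) + m%:~R * (pi *+ 2).
    by rewrite ht; move: (if b then _ else _) => u; ring.
  have e2 : 2 * rh = 2 * ((if b then -1 else 1) * r0) + n%:~R * (pi *+ 2) by rewrite hr; move: (if b then _ else _) => u; ring.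
  rewrite e1 e2 !cos_int !sin_int.
  case: b {e1 e2 ht hr} => /=; rewrite ?mulN1r ?mul1r ?mulrN ?cosN ?sinN -/c0 -/C0 -/s0 -/S0;
    (split; [lra|]); lra.
Qed.
End G.

Section P.
Variable F : fieldType.
Local Notation Y := ('X + 1 : {poly F}).

Lemma Y_neq0 : Y != 0.
Proof. by rewrite -size_poly_eq0 size_XaddC. Qed.

Lemma dvdY_C (c : F) : (Y %| c%:P) = (c == 0).
Proof.
have -> : Y = 'X - (-1)%:P by rewrite polyCN opprK.
by rewrite dvdp_XsubCl rootC.
Qed.

Lemma dvdY_step n (c : F) (q : {poly F}) :
  (Y ^+ n.+1 %| c%:P + Y * q) = (c == 0) && (Y ^+ n %| q).
Proof.
have [->|cn0] := eqVneq c 0.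
  by rewrite polyC0 add0r exprS dvdp_mul2l ?Y_neq0.
apply/negP => h.
have : Y %| c%:P + Y * q.
  by apply: dvdp_trans h; rewrite exprS dvdp_mulr.
by rewrite dvdp_addl ?dvdp_mulr // dvdY_C (negPf cn0).
Qed.

Definition P6 (a : nat -> F) : {poly F} := \sum_(k < 6) a k *: 'X^k.
Definition tc0 (a : nat -> F) := a 0%N - a 1%N + a 2%N - a 3%N + a 4%N - a 5%N.
Definition tc1 (a : nat -> F) := a 1%N - a 2%N *+ 2 + a 3%N *+ 3 - a 4%N *+ 4 + a 5%N *+ 5.
Definition tc2 (a : nat -> F) := a 2%N - a 3%N *+ 3 + a 4%N *+ 6 - a 5%N *+ 10.

Lemma P6_taylor a : P6 a = (tc0 a)%:P + Y * ((tc1 a)%:P + Y * ((tc2 a)%:P +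
   Y * ((a 3%N - a 4%N *+ 4 + a 5%N *+ 10)%:P + Y * ((a 4%N - a 5%N *+ 5)%:P + Y * (a 5%N)%:P)))).
Proof.
rewrite /P6 /tc0 /tc1 /tc2 !big_ord_recr big_ord0 /= -!mul_polyC.
ring.
Qed.

Lemma P6_div2 a : (Y ^+ 2 %| P6 a) = (tc0 a == 0) && (tc1 a == 0).
Proof. by rewrite P6_taylor !dvdY_step expr0 dvd1p andbT. Qed.

Lemma P6_div3 a : (Y ^+ 3 %| P6 a) = [&& tc0 a == 0, tc1 a == 0 & tc2 a == 0].
Proof. by rewrite P6_taylor !dvdY_step expr0 dvd1p andbT. Qed.
End P.
Arguments P6 {F}.
Arguments tc0 {F}.
Arguments tc1 {F}.
Arguments tc2 {F}.
Arguments P6_div2 {F}.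
Arguments P6_div3 {F}.

Section Main.
Variable R : realType.

Lemma Ceq0 (x : R) : (((x%:C)%C : R[i]) == 0) = (x == 0).
Proof. by apply/eqP/eqP => [[]|->]. Qed.

Lemma tc0C (t : R) (f : nat -> R) :
  tc0 (fun k => ((t * f k)%:C)%C : R[i]) = ((t * tc0 f)%:C)%C.
Proof. rewrite /tc0; ring. Qed.
Lemma tc1C (t : R) (f : nat -> R) :
  tc1 (fun k => ((t * f k)%:C)%C : R[i]) = ((t * tc1 f)%:C)%C.
Proof. rewrite /tc1; ring. Qed.
Lemma tc2C (t : R) (f : nat -> R) :
  tc2 (fun k => ((t * f k)%:C)%C : R[i]) = ((t * tc2 f)%:C)%C.
Proof. rewrite /tc2; ring. Qed.

Lemma tc0a (th rh : R) : tc0 (acoef th rh) = 0.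
Proof. by rewrite /tc0 /acoef /=; field. Qed.
Lemma tc1a (th rh : R) : tc1 (acoef th rh) = 1 - 2 * (cos (2 * th) + cos (2 * rh)).
Proof. by rewrite /tc1 /acoef /=; field. Qed.
Lemma tc2a (th rh : R) : tc2 (acoef th rh) =
  -2 + 4 * (cos (2 * th) + cos (2 * rh)) - (sin (2 * th) + sin (2 * rh))
  + 2 * sin (2 * th - 2 * rh).
Proof. by rewrite /tc2 /acoef /=; field. Qed.

Lemma ceq (t x : R) : t != 0 -> ((((t * x)%:C)%C : R[i]) == 0) = (x == 0).
Proof. by move=> t0; rewrite Ceq0 mulf_eq0 (negPf t0). Qed.
End Main.

Theorem proposition8p12 (R : realType) (theta rho : R) :
  (('X + 1) ^+ 2 %| m0 theta rho
     <-> cos (2 * theta) + cos (2 * rho) = 2^-1)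
  /\
  ((('X + 1) ^+ 3 %| m0 theta rho)
     <-> (cos (2 * theta) + cos (2 * rho) = 2^-1 /\
          sin (2 * theta) + sin (2 * rho) = 2 * sin (2 * theta - 2 * rho)))
  /\
  ((('X + 1) ^+ 3 %| m0 theta rho)
     <-> exists (m n : int) (s : bool),
          let sg : R := if s then -1 else 1 in
          theta = sg * theta0 R + m%:~R * pi /\
          rho = sg * rho0 R + n%:~R * pi).
Proof.
have hm : m0 theta rho = P6 (fun k => (((Num.sqrt 2)^-1 * acoef theta rho k)%:C)%C) by [].
have t0 : (Num.sqrt (2 : R))^-1 != 0.
  by rewrite invr_eq0 sqrtr_eq0 -ltNge; apply: ltr0Sn.
have E2 : ('X + 1) ^+ 2 %| m0 theta rho <-> cos (2 * theta) + cos (2 * rho) = 2^-1.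
  rewrite hm P6_div2 tc0C tc1C !ceq // tc0a tc1a eqxx /=.
  split => [/eqP h|h]; [lra|apply/eqP; lra].
have E3 : ('X + 1) ^+ 3 %| m0 theta rho <->
    (cos (2 * theta) + cos (2 * rho) = 2^-1 /\
     sin (2 * theta) + sin (2 * rho) = 2 * sin (2 * theta - 2 * rho)).
  rewrite hm P6_div3 tc0C tc1C tc2C !ceq // tc0a tc1a tc2a eqxx /=.
  split => [/andP [/eqP h1 /eqP h2]|[h1 h2]]; first by split; lra.
  by apply/andP; split; apply/eqP; lra.
split => //; split => //.
apply: (iff_trans E3).
exact: orbit.
Qed.
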